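(* Consider the $k$-means++ seeding algorithm on a finite set $\mathbf{X}\subset\mathbb{R}^d$ with a fixed optimal $k$-clustering $P_1,\dots,P_k$. Then for every $t\ge1$, $$\mathbb{E}\big[\widetilde{H}_{t+1}(\mathbf{X})\mid C_t\big]\le\widetilde{H}_t(\mathbf{X}).$$ In particular $\mathbb{E}[\mathrm{cost}(P_i,C_t)\mathbf{1}\{P_i\cap C_t\ne\varnothing\}]$ summed over $i$ is at most $5\,\mathrm{OPT}_k(\mathbf{X})$ for every $t$.
   Context: For a finite set $C\subset\mathbb{R}^d$ and a point $x$, $\mathrm{cost}(x,C)=\min_{c\in C}\|x-c\|^2$; $\mathrm{cost}(\mathbf{Y},C)=\sum_{x\in\mathbf{Y}}\mathrm{cost}(x,C)$; $\mathrm{OPT}_i(\mathbf{Y})=\min_{|C|=i}\mathrm{cost}(\mathbf{Y},C)$. The $k$-means++ seeding algorithm: $c_1$ uniform from $\mathbf{X}$, $C_1=\{c_1\}$; $C_{t+1}=C_t\cup\{x\}$ with $x$ chosen with probability $\mathrm{cost}(x,C_t)/\mathrm{cost}(\mathbf{X},C_t)$. Fix an optimal $k$-means clustering $P_1,\dots,P_k$ of $\mathbf{X}$ (a partition induced by an optimal center set, so $\mathrm{OPT}_k(\mathbf{X})=\sum_i\mathrm{OPT}_1(P_i)$). $P_i$ is covered by $C$ if $C\cap P_i\neq\varnothing$. Define $\widetilde H_t(P_i)=\mathrm{cost}(P_i,C_{t_i})$ if $P_i$ is covered by $C_t$, where $t_i\le t$ is the first time $P_i$ is covered, and $\widetilde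 H_t(P_i)=5\,\mathrm{OPT}_1(P_i)$ otherwise; $\widetilde H_t(\mathbf{X})=\sum_{i=1}^k\widetilde H_t(P_i)$. *)

(* Defs.v *)
From HB Require Import structures.
From mathcomp Require Import all_boot all_order all_algebra.
From mathcomp Require Import all_classical all_reals.
Set Implicit Arguments. Unset Strict Implicit. Unset Printing Implicit Defensive.
Import Order.TTheory GRing.Theory Num.Theory.
Local Open Scope classical_set_scope.
Local Open Scope ring_scope.

Definition sqdist (R : realType) (d : nat) (u v : 'rV[R]_d) : R :=
  \sum_(j < d) (u ord0 j - v ord0 j) ^+ 2.

(* cost(v, C) = min_{c in C} ||v - c||^2 ; convention: 0 if C is empty
   (only ever used with nonempty C, except in the first sampling step
   where the sampling distribution is explicitly uniform) *)
Definition costv (R : realType) (d : nat) (v : 'rV[R]_d) (C : seq 'rV[R]_d) : R :=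
  match C with
  | [::] => 0
  | c :: C' => foldr (fun c' m => Num.min (sqdist v c') m) (sqdist v c) C'
  end.

(* the data set X is given as the image of an injective map pos : T -> R^d *)
Definition Xcost (R : realType) (d : nat) (T : finType) (pos : T -> 'rV[R]_d)
  (C : seq 'rV[R]_d) : R := \sum_(x : T) costv (pos x) C.

Definition clcost (R : realType) (d k : nat) (T : finType) (pos : T -> 'rV[R]_d)
  (a : T -> 'I_k) (i : 'I_k) (C : seq 'rV[R]_d) : R :=
  \sum_(x : T | a x == i) costv (pos x) C.

Definition OPT1 (R : realType) (d k : nat) (T : finType) (pos : T -> 'rV[R]_d)
  (a : T -> 'I_k) (i : 'I_k) : R :=
  inf (range (fun c : 'rV[R]_d => \sum_(x : T | a x == i) sqdist (pos x) c)).

Definition OPTk (R : realType) (d : nat) (T : finType) (pos : T -> 'rV[R]_d)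
  (k : nat) : R :=
  inf ((fun c : 'I_k -> 'rV[R]_d => Xcost pos (map c (enum 'I_k)))
         @` [set c | injective c]).

Definition Htilde (R : realType) (d k : nat) (T : finType) (pos : T -> 'rV[R]_d)
  (a : T -> 'I_k) (h : seq T) : R :=
  \sum_(i < k)
    (if has (fun c => a c == i) h
     then clcost pos a i (map pos (take (find (fun c => a c == i) h).+1 h))
     else 5 * OPT1 pos a i).

(* D^2 sampling probability of x given the history h (C_t = centers of h);
   convention: uniform if cost(X, C_t) = 0 *)
Definition step (R : realType) (d : nat) (T : finType) (pos : T -> 'rV[R]_d)
  (h : seq T) (x : T) : R :=
  if 0 < Xcost pos (map pos h)
  then costv (pos x) (map pos h) / Xcost pos (map pos h)
  else (#|T|%:R)^-1.

(* probability that k-means++ produces the history prefix ++ rest, given prefix;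
   the first center is uniform *)
Fixpoint hprob_aux (R : realType) (d : nat) (T : finType) (pos : T -> 'rV[R]_d)
  (prefix rest : seq T) : R :=
  match rest with
  | [::] => 1
  | x :: r =>
      (if prefix is [::] then (#|T|%:R)^-1 else step pos prefix x)
      * hprob_aux pos (rcons prefix x) r
  end.

Definition hprob (R : realType) (d : nat) (T : finType) (pos : T -> 'rV[R]_d)
  (h : seq T) : R := hprob_aux pos [::] h.

(* Main.v *)
Require Import Defs.
From HB Require Import structures.
From mathcomp Require Import all_boot all_order all_algebra.
From mathcomp Require Import lra.
From mathcomp Require Import all_classical all_reals.
Import Order.TTheory GRing.Theory Num.Theory.
Local Open Scope ring_scope.
Set Implicit Arguments. Unset Strict Implicit.

Section S.
Variables (R : realType) (d : nat).
Implicit Types (u v w : 'rV[R]_d) (C : seq 'rV[R]_d).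

Lemma sqdist_ge0 u v : 0 <= sqdist u v.
Proof. by apply: sumr_ge0 => j _; apply: sqr_ge0. Qed.

Lemma sqdistC u v : sqdist u v = sqdist v u.
Proof. by apply: eq_bigr => j _; rewrite -sqrrN opprB. Qed.

Lemma sqdist_tri u v w : sqdist u w <= 2 * sqdist u v + 2 * sqdist v w.
Proof.
rewrite /sqdist !mulr_sumr -big_split /=; apply: ler_sum => j _.
set a := u ord0 j; set b := v ord0 j; set c := w ord0 j.
have := sqr_ge0 (a - 2 * b + c); rewrite !expr2; nra.
Qed.

Lemma foldr_min_props v m0 C :
  let f := foldr (fun c' m => Num.min (sqdist v c') m) m0 C in
  f <= m0 /\ (forall e, e \in C -> f <= sqdist v e) /\
  (f = m0 \/ exists2 e, e \in C & f = sqdist v e).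
Proof.
elim: C => [|c C [IH1 [IH2 IH3]]] /=; first by split=> //; split=> // ; left.
set f := foldr _ _ C in IH1 IH2 IH3 *.
split; first by rewrite ge_min IH1 orbT.
split.
  move=> e; rewrite inE => /orP [/eqP ->|eC]; first by rewrite ge_min lexx.
  by rewrite ge_min IH2 ?orbT.
case: (leP (sqdist v c) f) => h.
  by right; exists c; rewrite ?inE ?eqxx // (min_idPl h).
case: IH3 => [->|[e eC ->]]; first by left.
by right; exists e => //; rewrite inE eC orbT.
Qed.

Lemma costv_le v C e : e \in C -> costv v C <= sqdist v e.
Proof.
case: C => [//|c C] /=; rewrite inE => /orP [/eqP ->|eC].
  by case: (foldr_min_props v (sqdist v c) C).
by case: (foldr_min_props v (sqdist v c) C) => _ [-> //].
Qed.

Lemma costv_att v C : C != [::] -> exists2 e, e \in C & costv v C = sqdist v e.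
Proof.
case: C => [//|c C] _ /=.
case: (foldr_min_props v (sqdist v c) C) => _ [_ [->|[e eC ->]]].
  by exists c; rewrite ?inE ?eqxx.
by exists e; rewrite // inE eC orbT.
Qed.

Lemma costv_ge0 v C : 0 <= costv v C.
Proof.
case: (C =P [::]) => [->//|/eqP /(costv_att v) [e _ ->]]; exact: sqdist_ge0.
Qed.

Lemma costv_catl v C1 C2 : C1 != [::] -> costv v (C1 ++ C2) <= costv v C1.
Proof.
move=> /(costv_att v) [e eC ->]; apply: costv_le; by rewrite mem_cat eC.
Qed.

Lemma costv_rcons v C c : C != [::] ->
  costv v (rcons C c) = Num.min (costv v C) (sqdist v c).
Proof.
move=> hC; apply/eqP; rewrite eq_le; apply/andP; split.
  rewrite le_min; apply/andP; split.
    by rewrite -cats1 costv_catl.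
  by apply: costv_le; rewrite mem_rcons inE eqxx.
have [|e] := costv_att v (C := rcons C c); first by case: (C) hC.
rewrite mem_rcons inE => /orP [/eqP ->|eC] ->; first by rewrite ge_min lexx orbT.
by rewrite ge_min costv_le.
Qed.

Lemma costv_tri u v C : C != [::] -> costv u C <= 2 * costv v C + 2 * sqdist u v.
Proof.
move=> /(costv_att v) [e eC ->].
apply: le_trans (costv_le u eC) _.
by rewrite addrC; apply: sqdist_tri.
Qed.

End S.

Section P.
Variable R : realType.

Lemma pair_bound (P Q r : R) : 0 <= P -> 0 <= Q -> 0 <= r ->
  P <= 2 * Q + 2 * r -> Q <= 2 * P + 2 * r ->
  P * Num.min Q r + Q * Num.min P r <= 5 * Num.min P Q * r.
Proof.
move=> hP hQ hr h1 h2.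
case: (leP Q r) => h3; case: (leP P r) => h4; case: (leP P Q) => h5; nra.
Qed.

Lemma min_shift (a b m : R) :
  Num.min a b = m + Num.min (a - m) (b - m).
Proof.
case: (leP a b) => h; case: (leP (a - m) (b - m)) => h'; lra.
Qed.

Lemma minK_psd (I : finType) (w u : I -> R) : (forall i, 0 <= w i) ->
  0 <= \sum_c \sum_x Num.min (w c) (w x) * (u c * u x).
Proof.
move=> w0.
suff H : forall n (w : I -> R), (forall i, 0 <= w i) ->
  (#|[pred i | (0 < w i)%R]| <= n)%N ->
  0 <= \sum_c \sum_x Num.min (w c) (w x) * (u c * u x) by exact: H _ _ w0 (leqnn _).
elim=> [|n IH] {w0}w w0 hn.
  have wz : forall i, w i = 0.
    move=> i; move: hn; rewrite leqn0 => /eqP/card0_eq/(_ i).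
    rewrite !inE => /negbT; rewrite -leNgt => h; apply/eqP; rewrite eq_le h w0.
    done.
  by apply: sumr_ge0 => c _; apply: sumr_ge0 => x _; rewrite !wz minxx mul0r.
case: (pickP [pred i | 0 < w i]) => [i0 hi0|none]; last first.
  have wz : forall i, w i = 0.
    move=> i; have := none i; rewrite !inE => /negbT; rewrite -leNgt => h.
    by apply/eqP; rewrite eq_le h w0.
  by apply: sumr_ge0 => c _; apply: sumr_ge0 => x _; rewrite !wz minxx mul0r.
have [z hz zmin] : exists2 z, 0 < w z & forall j, 0 < w j -> w z <= w j.
  case: (@arg_minP _ _ _ i0 [pred i | 0 < w i] w hi0) => z hz zm.
  by exists z => // j hj; apply: zm.
set m := w z.
pose w' i := if 0 < w i then w i - m else 0.
have w'0 : forall i, 0 <= w' i.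
  by move=> i; rewrite /w'; case: ifP => // /zmin; rewrite subr_ge0.
have hsub : [pred i | 0 < w' i] \proper [pred i | 0 < w i].
  apply/properP; split.
    apply/fintype.subsetP => i; rewrite !inE /w'; case: ifP => //; by rewrite ltxx.
  by exists z; rewrite !inE ?hz // /w' hz subrr ltxx.
have hn' : (#|[pred i | (0 < w' i)%R]| <= n)%N.
  by have := proper_card hsub; move=> h; rewrite -ltnS (leq_trans h hn).
have IH' := IH w' w'0 hn'.
pose v i := if 0 < w i then u i else 0.
have split_ : forall c x, Num.min (w c) (w x) * (u c * u x) =
   m * (v c * v x) + Num.min (w' c) (w' x) * (u c * u x).
  move=> c x; rewrite /v /w'.
  case: ifP => hc; case: ifP => hx.
  - by rewrite (min_shift _ _ m) mulrDl.
  - have -> : w x = 0 by apply/eqP; rewrite eq_le w0 leNgt hx.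
    have h1 : 0 <= w c - m by rewrite subr_ge0 zmin.
    by rewrite (min_idPr (w0 c)) (min_idPr h1) !(mulr0, mul0r, addr0).
  - have -> : w c = 0 by apply/eqP; rewrite eq_le w0 leNgt hc.
    have h1 : 0 <= w x - m by rewrite subr_ge0 zmin.
    by rewrite (min_idPl (w0 x)) (min_idPl h1) !(mulr0, mul0r, addr0).
  - have -> : w c = 0 by apply/eqP; rewrite eq_le w0 leNgt hc.
    by rewrite minxx (min_idPl (w0 x)) !(mulr0, mul0r, addr0).
under eq_bigr => c _ do under eq_bigr => x _ do rewrite split_.
under eq_bigr => c _ do rewrite big_split /=.
rewrite big_split /=; apply: addr_ge0 => //.
under eq_bigr => c _ do rewrite -mulr_sumr -mulr_sumr.
rewrite -mulr_sumr -mulr_suml; apply: mulr_ge0; first exact: ltW.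
by rewrite -expr2 sqr_ge0.
Qed.

End P.

Section Q.
Variables (R : realType) (d : nat).

Lemma minK_sqdist (T : finType) (P : pred T) (w : T -> R) (p : T -> 'rV[R]_d)
  (z : 'rV[R]_d) : (forall i, 0 <= w i) ->
  \sum_(c | P c) \sum_(x | P x) Num.min (w c) (w x) * sqdist (p c) (p x)
   <= 2 * (\sum_(c | P c) w c) * \sum_(c | P c) sqdist (p c) z.
Proof.
move=> w0.
pose w' c := if P c then w c else 0.
have w'0 : forall c, 0 <= w' c by move=> c; rewrite /w'; case: ifP.
set W := \sum_(c | P c) w c.
have HW : W = \sum_c w' c by rewrite /W big_mkcond.
pose m c x := Num.min (w' c) (w' x).
have m0 : forall c x, 0 <= m c x by move=> c x; rewrite le_min !w'0.
have HL : \sum_(c | P c) \sum_(x | P x) Num.min (w c) (w x) * sqdist (p c) (p x)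
   = \sum_c \sum_x m c x * sqdist (p c) (p x).
  rewrite big_mkcond /=; apply: eq_bigr => c _.
  rewrite big_mkcond /=; case: ifP => Pc.
    apply: eq_bigr => x _; rewrite /m /w' Pc; case: ifP => Px //.
    by rewrite (min_idPr (w0 c)) mul0r.
  by rewrite big1 // => x _; rewrite /m /w' Pc (min_idPl (w'0 x)) mul0r.
rewrite HL.
pose a c j := p c ord0 j - z ord0 j.
have Hsq : forall c x, sqdist (p c) (p x) = \sum_j (a c j ^+ 2 + a x j ^+ 2 - 2 * (a c j * a x j)).
  move=> c x; apply: eq_bigr => j _; rewrite /a; nra.
have Hmx : forall c, \sum_x m c x <= (if P c then W else 0).
  move=> c; rewrite /m; case: ifP => Pc.
    by rewrite HW; apply: ler_sum => x _; rewrite ge_min lexx orbT.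
  by rewrite big1 // => x _; rewrite /w' Pc (min_idPl (w'0 x)).
have step1 : forall j, \sum_c \sum_x m c x * (a c j ^+ 2 + a x j ^+ 2 - 2 * (a c j * a x j))
     <= 2 * W * \sum_(c | P c) a c j ^+ 2.
  move=> j.
  have psd := @minK_psd R T w' (fun c => a c j) w'0.
  have E1 : \sum_c \sum_x m c x * (a c j ^+ 2 + a x j ^+ 2 - 2 * (a c j * a x j)) =
     (\sum_c \sum_x m c x * a c j ^+ 2) + (\sum_c \sum_x m c x * a x j ^+ 2)
     - 2 * \sum_c \sum_x Num.min (w' c) (w' x) * (a c j * a x j).
    rewrite mulr_sumr -sumrN -!big_split /=; apply: eq_bigr => c _.
    rewrite mulr_sumr -sumrN -!big_split /=; apply: eq_bigr => x _; rewrite /m; nra.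
  have E2 : \sum_c \sum_x m c x * a x j ^+ 2 = \sum_c \sum_x m c x * a c j ^+ 2.
    rewrite exchange_big /=; apply: eq_bigr => c _; apply: eq_bigr => x _.
    by rewrite /m minC.
  have E3 : \sum_c \sum_x m c x * a c j ^+ 2 <= W * \sum_(c | P c) a c j ^+ 2.
    rewrite mulr_sumr [in X in _ <= X]big_mkcond /=; apply: ler_sum => c _.
    rewrite -mulr_suml; case: ifP => Pc.
      by apply: ler_wpM2r; [exact: sqr_ge0 | have := Hmx c; rewrite Pc].
    have := Hmx c; rewrite Pc => h.
    have h0 : \sum_x m c x = 0 by apply/eqP; rewrite eq_le h sumr_ge0.
    by rewrite h0 mul0r.
  rewrite E1 E2; lra.
rewrite [X in _ <= X](_ : _ = 2 * W * \sum_j \sum_(c | P c) a c j ^+ 2); last first.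
  rewrite exchange_big /=; congr (_ * _); apply: eq_bigr => c _.
rewrite mulr_sumr; under eq_bigr => c _ do under eq_bigr => x _ do rewrite Hsq mulr_sumr.
under eq_bigr => c _ do rewrite exchange_big /=.
rewrite exchange_big /=; apply: ler_sum => j _; exact: step1.
Qed.

End Q.

Section K.
Variables (R : realType) (d : nat).

Lemma key (T : finType) (P : pred T) (pos : T -> 'rV[R]_d) (C : seq 'rV[R]_d)
  (z : 'rV[R]_d) : C != [::] ->
  \sum_(c | P c) costv (pos c) C *
     \sum_(x | P x) Num.min (costv (pos x) C) (sqdist (pos x) (pos c))
  <= 5 * (\sum_(c | P c) costv (pos c) C) * \sum_(x | P x) sqdist (pos x) z.
Proof.
move=> hC.
set D := fun x => costv (pos x) C.
have D0 : forall x, 0 <= D x by move=> x; exact: costv_ge0.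
set L := \sum_(c | P c) _.
have HL : L = \sum_(c | P c) \sum_(x | P x) D c * Num.min (D x) (sqdist (pos x) (pos c)).
  by apply: eq_bigr => c _; rewrite mulr_sumr.
have HL' : L = \sum_(c | P c) \sum_(x | P x) D x * Num.min (D c) (sqdist (pos c) (pos x)).
  by rewrite HL exchange_big.
have H2 : L + L <= \sum_(c | P c) \sum_(x | P x) 5 * Num.min (D c) (D x) * sqdist (pos c) (pos x).
  rewrite {1}HL HL' -big_split /=; apply: ler_sum => c Pc.
  rewrite -big_split /=; apply: ler_sum => x Px.
  rewrite [sqdist (pos x) (pos c)]sqdistC.
  apply: pair_bound; rewrite ?D0 ?sqdist_ge0 //.
    exact: costv_tri.
  by rewrite sqdistC; exact: costv_tri.
have H3 := minK_sqdist P pos z D0.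
have H4 : \sum_(c | P c) \sum_(x | P x) 5 * Num.min (D c) (D x) * sqdist (pos c) (pos x)
  = 5 * \sum_(c | P c) \sum_(x | P x) Num.min (D c) (D x) * sqdist (pos c) (pos x).
  rewrite mulr_sumr; apply: eq_bigr => c _; rewrite mulr_sumr; apply: eq_bigr => x _.
  by rewrite mulrA.
rewrite H4 in H2.
have : L + L <= 5 * (2 * (\sum_(c | P c) D c) * \sum_(c | P c) sqdist (pos c) z).
  apply: le_trans H2 _; apply: ler_wpM2l => //.
rewrite /D; lra.
Qed.

End K.

Section M.
Variables (R : realType) (d k : nat) (T : finType) (pos : T -> 'rV[R]_d) (a : T -> 'I_k).

Lemma OPT1_le i z : OPT1 pos a i <= \sum_(x | a x == i) sqdist (pos x) z.
Proof.
apply: ge_inf; last by exists z.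
exists 0 => y [c _ <-]; apply: sumr_ge0 => x _; exact: sqdist_ge0.
Qed.

Lemma OPT1_ge0 i : 0 <= OPT1 pos a i.
Proof.
apply: lb_le_inf; first by exists (\sum_(x | a x == i) sqdist (pos x) 0), 0.
move=> y [c _ <-]; apply: sumr_ge0 => x _; exact: sqdist_ge0.
Qed.

Lemma OPT1_bound i (L K : R) : 0 <= K ->
  (forall z, L <= K * \sum_(x | a x == i) sqdist (pos x) z) -> L <= K * OPT1 pos a i.
Proof.
move=> K0 H; case: (ltP 0 K) => hK; last first.
  have K00 : K = 0 by apply/eqP; rewrite eq_le hK K0.
  by have := H 0; rewrite K00 !mul0r.
rewrite -ler_pdivrMl //; apply: lb_le_inf; first by exists (\sum_(x | a x == i) sqdist (pos x) 0), 0.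
by move=> y [c _ <-]; rewrite ler_pdivrMl.
Qed.

Definition term (h : seq T) (i : 'I_k) : R :=
  if has (fun c => a c == i) h
  then clcost pos a i (map pos (take (find (fun c => a c == i) h).+1 h))
  else 5 * OPT1 pos a i.

Lemma HtildeE h : Htilde pos a h = \sum_i term h i.
Proof. by []. Qed.

Lemma term_rcons_has h x i : has (fun c => a c == i) h -> term (rcons h x) i = term h i.
Proof.
move=> hh; rewrite /term has_rcons hh orbT -cats1 find_cat hh takel_cat //.
by rewrite -has_find.
Qed.

Lemma term_rcons_new h x i : ~~ has (fun c => a c == i) h ->
  term (rcons h x) i = if a x == i then clcost pos a i (map pos (rcons h x))
                       else 5 * OPT1 pos a i.
Proof.
move=> hh; rewrite /term has_rcons (negbTE hh) orbF; case: ifP => // hx.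
rewrite -cats1 find_cat (negbTE hh) /= hx addn0 take_oversize //.
by rewrite size_cat /= addn1.
Qed.

Lemma part1_pos (h : seq T) : h != [::] ->
  \sum_x costv (pos x) (map pos h) * Htilde pos a (rcons h x)
  <= \sum_x costv (pos x) (map pos h) * Htilde pos a h.
Proof.
move=> hne.
have hC : map pos h != [::] by case: (h) hne.
set Dv := fun x => costv (pos x) (map pos h).
have D0 : forall x, 0 <= Dv x by move=> x; exact: costv_ge0.
rewrite /Dv.
under eq_bigr => x _ do rewrite HtildeE mulr_sumr.
rewrite exchange_big /=.
under [X in _ <= X]eq_bigr => x _ do rewrite HtildeE mulr_sumr.
rewrite [X in _ <= X]exchange_big /=.
apply: ler_sum => i _.
case hh : (has (fun c => a c == i) h).
  by apply: ler_sum => x _; rewrite term_rcons_has.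
under eq_bigr => x _ do rewrite term_rcons_new ?hh //.
rewrite (bigID (fun x => a x == i)) [X in _ <= X](bigID (fun x => a x == i)) /=.
apply: lerD; last first.
  apply: ler_sum => x /negbTE ->; rewrite /term hh; exact: lexx.
under eq_bigr => x hx do rewrite hx.
under [X in _ <= X]eq_bigr => x hx do rewrite /term hh.
rewrite -mulr_suml mulrC mulrAC.
apply: OPT1_bound; first by apply: mulr_ge0 => //; apply: sumr_ge0 => x _; exact: D0.
move=> z.
apply: le_trans (key (fun x => a x == i) pos z hC).
apply: ler_sum => c _; apply: ler_wpM2l; first exact: D0.
rewrite /clcost; apply: ler_sum => x _; rewrite map_rcons costv_rcons //.
Qed.

End M.

Section N.
Variables (R : realType) (d k : nat) (T : finType) (pos : T -> 'rV[R]_d) (a : T -> 'I_k).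
Hypothesis posI : injective pos.

Lemma sqdist0 (u v : 'rV[R]_d) : sqdist u v = 0 -> u = v.
Proof.
move=> h; apply/matrixP => i j; rewrite (ord1 i).
have := psumr_eq0P (P := predT) (fun j _ => sqr_ge0 (u ord0 j - v ord0 j)) h (i := j) isT.
by move/eqP; rewrite sqrf_eq0 subr_eq0 => /eqP.
Qed.

Lemma mem_of_cost0 h x : h != [::] -> costv (pos x) (map pos h) = 0 -> x \in h.
Proof.
move=> hne; have hC : map pos h != [::] by case: (h) hne.
case: (costv_att (pos x) hC) => e /mapP [y yh ->] -> /sqdist0 /posI -> //.
Qed.

Lemma Htilde_rcons_mem h x : x \in h -> Htilde pos a (rcons h x) = Htilde pos a h.
Proof.
move=> xh; rewrite !HtildeE; apply: eq_bigr => i _.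
case hh : (has (fun c => a c == i) h); first by rewrite term_rcons_has.
rewrite term_rcons_new ?hh //; case: ifP => hx; last by rewrite /term hh.
by move/negbT: hh => /hasPn /(_ x xh); rewrite hx.
Qed.

Lemma part1 (h : seq T) : (1 <= size h)%N ->
  \sum_x step pos h x * Htilde pos a (rcons h x) <= Htilde pos a h.
Proof.
move=> hs; have hne : h != [::] by case: (h) hs.
rewrite /step; set Phi := Xcost pos (map pos h).
have Phi_def : Phi = \sum_x costv (pos x) (map pos h) by [].
case: (ltP 0 Phi) => hP.
  under eq_bigr => x _ do rewrite mulrAC.
  rewrite -mulr_suml.
  rewrite ler_pdivrMr //.
  apply: le_trans (part1_pos pos a hne) _.
  by rewrite -mulr_suml -Phi_def mulrC.
have c0 : forall x, costv (pos x) (map pos h) = 0.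
  move=> x; apply: (@psumr_eq0P _ _ predT (fun x => costv (pos x) (map pos h))) => //.
    by move=> y _; exact: costv_ge0.
  by apply/eqP; rewrite eq_le -Phi_def hP sumr_ge0 // => y _; exact: costv_ge0.
under eq_bigr => x _ do rewrite Htilde_rcons_mem ?(mem_of_cost0 hne (c0 x)) //.
rewrite -mulr_suml sumr_const.
have hT : (0 < #|T|)%N by case: (h) hs => // y _ _; apply/card_gt0P; exists y.
by rewrite (_ : #|xpredT| = #|T|) // -[_ *+ #|T|]mulr_natr mulVf ?mul1r // pnatr_eq0 -lt0n hT.
Qed.

End N.

Section G.
Variables (R : realType) (d k : nat) (T : finType) (pos : T -> 'rV[R]_d) (a : T -> 'I_k).
Hypothesis posI : injective pos.

Lemma step_ge0 h x : 0 <= step pos h x.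
Proof.
rewrite /step; case: ifP => h0; last by rewrite invr_ge0.
by rewrite divr_ge0 ?costv_ge0 // ltW.
Qed.

Lemma hprob_aux_ge0 p h : 0 <= hprob_aux pos p h.
Proof.
elim: h p => [|x h IH] p /=; first exact: ler01.
apply: mulr_ge0 => //; case: p => [|y p]; [by rewrite invr_ge0 | exact: step_ge0].
Qed.

Lemma big_tuple0 (F : 0.-tuple T -> R) : \sum_(u : 0.-tuple T) F u = F [tuple].
Proof.
rewrite (eq_bigr (fun _ => F [tuple])) ?sumr_const ?card_tuple ?expn0 //.
by move=> u _; rewrite tuple0.
Qed.

Lemma big_tuple_cons t (F : t.+1.-tuple T -> R) :
  \sum_(u : t.+1.-tuple T) F u = \sum_x \sum_(h : t.-tuple T) F [tuple of x :: h].
Proof.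
rewrite pair_bigA /=.
rewrite (reindex (fun p : T * t.-tuple T => [tuple of p.1 :: p.2])) //=.
exists (fun u : t.+1.-tuple T => (thead u, [tuple of behead u])).
  by case=> x h _ /=; congr pair; apply: val_inj.
by move=> u _; rewrite [RHS]tuple_eta.
Qed.

Lemma E_bound t (p : seq T) : (1 <= size p)%N ->
  \sum_(h : t.-tuple T) hprob_aux pos p h * Htilde pos a (p ++ h) <= Htilde pos a p.
Proof.
elim: t p => [|t IH] p hp.
  by rewrite big_tuple0 /= cats0 mul1r.
rewrite big_tuple_cons.
apply: le_trans (part1 a posI hp).
apply: ler_sum => x _.
have hp' : (1 <= size (rcons p x))%N by rewrite size_rcons.
apply: le_trans (ler_wpM2l (step_ge0 p x) (IH _ hp')).
rewrite mulr_sumr; apply: ler_sum => h _ /=.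
case: p hp hp' => [//|y p] _ _.
by rewrite -cat_rcons mulrA.
Qed.

End G.

Section H.
Variables (R : realType) (d k : nat) (T : finType) (pos : T -> 'rV[R]_d) (a : T -> 'I_k).
Hypothesis posI : injective pos.

Lemma S_ge0 : 0 <= \sum_i OPT1 pos a i.
Proof. by apply: sumr_ge0 => i _; exact: OPT1_ge0. Qed.

Lemma Htilde1 : \sum_x Htilde pos a [:: x] <= \sum_(x : T) (5 * \sum_i OPT1 pos a i).
Proof.
under eq_bigr => x _ do rewrite HtildeE.
under [X in _ <= X]eq_bigr => x _ do rewrite mulr_sumr.
rewrite exchange_big [X in _ <= X]exchange_big /=.
apply: ler_sum => i _.
rewrite (bigID (fun x => a x == i)) [X in _ <= X](bigID (fun x => a x == i)) /=.
apply: lerD; last first.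
  by apply: ler_sum => x /negbTE hx; rewrite /term /= hx.
under eq_bigr => x hx do rewrite /term /= hx /=.
have E1 : \sum_(x | a x == i) 5 * OPT1 pos a i =
   (2 * \sum_(x | a x == i) (1 : R)) * OPT1 pos a i
   + (3 * \sum_(x | a x == i) (1 : R)) * OPT1 pos a i.
  have -> : \sum_(x | a x == i) 5 * OPT1 pos a i = 5 * OPT1 pos a i * \sum_(x | a x == i) (1 : R).
    by rewrite mulr_sumr; apply: eq_bigr => x _; rewrite mulr1.
  nra.
rewrite E1 -[X in X <= _]addr0; apply: lerD; last first.
  by apply: mulr_ge0; [apply: mulr_ge0 => //; apply: sumr_ge0 | exact: OPT1_ge0].
apply: OPT1_bound; first by apply: mulr_ge0 => //; apply: sumr_ge0.
move=> z.
have := @minK_sqdist R d T (fun x => a x == i) (fun _ : T => (1 : R)) pos z (fun _ => ler01).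
rewrite minxx; apply: le_trans.
rewrite /clcost; apply: ler_sum => x _; apply: ler_sum => y _.
by rewrite mul1r sqdistC.
Qed.

Lemma Htilde_total t :
  \sum_(h : t.-tuple T) hprob pos h * Htilde pos a h <= 5 * \sum_i OPT1 pos a i.
Proof.
case: t => [|t].
  rewrite big_tuple0 /= mul1r HtildeE mulr_sumr; apply: ler_sum => i _.
  by rewrite /term /=.
rewrite big_tuple_cons.
apply: (@le_trans _ _ (\sum_x (#|T|%:R)^-1 * Htilde pos a [:: x])).
  apply: ler_sum => x _.
  rewrite /hprob /=.
  under eq_bigr => h _ do rewrite -mulrA.
  rewrite -mulr_sumr; apply: ler_wpM2l; first by rewrite invr_ge0.
  exact: (E_bound a posI t (p := [:: x])).
rewrite -mulr_sumr.
case: (posnP #|T|) => hT.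
  by rewrite hT invr0 mul0r; apply: mulr_ge0 => //; exact: S_ge0.
apply: le_trans (ler_wpM2l _ Htilde1) _; first by rewrite invr_ge0.
rewrite sumr_const (_ : #|xpredT| = #|T|) // -[(5 * _) *+ #|T|]mulr_natl !mulrA mulVf ?mul1r //.
by rewrite pnatr_eq0 -lt0n hT.
Qed.

Lemma cov_le (h : seq T) :
  \sum_(i < k) (if has (fun c => a c == i) h then clcost pos a i (map pos h) else 0)
  <= Htilde pos a h.
Proof.
rewrite HtildeE; apply: ler_sum => i _; rewrite /term.
case: ifP => hh; last by apply: mulr_ge0 => //; exact: OPT1_ge0.
rewrite /clcost; apply: ler_sum => x _.
set n := (find _ h).+1.
rewrite -{1}(cat_take_drop n h) map_cat costv_catl //.
by case: (h) hh => [//|y h'] _.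
Qed.

End H.
Unset Implicit Arguments. Set Strict Implicit.

Theorem mainTheorem6 (R : realType) (d k : nat) (T : finType)
  (pos : T -> 'rV[R]_d) (cstar : 'I_k -> 'rV[R]_d) (a : T -> 'I_k) :
  injective pos ->
  injective cstar ->
  (forall x : T, sqdist (pos x) (cstar (a x)) = costv (pos x) (map cstar (enum 'I_k))) ->
  Xcost pos (map cstar (enum 'I_k)) = OPTk pos k ->
  (forall h : seq T, (1 <= size h)%N -> 0 < hprob pos h ->
     \sum_(x : T) step pos h x * Htilde pos a (rcons h x) <= Htilde pos a h)
  /\
  (forall t : nat,
     \sum_(h : t.-tuple T) hprob pos h *
        (\sum_(i < k) (if has (fun c => a c == i) h
                       then clcost pos a i (map pos h) else 0))
     <= 5 * OPTk pos k).
Proof.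
move=> posI _ hnear hopt; split.
  by move=> h hs _; exact: part1.
move=> t.
have SO : \sum_i OPT1 pos a i <= OPTk pos k.
  rewrite -hopt /Xcost.
  apply: (@le_trans _ _ (\sum_i \sum_(x | a x == i) sqdist (pos x) (cstar i))).
    by apply: ler_sum => i _; exact: OPT1_le.
  rewrite (partition_big a predT) //=; apply: ler_sum => i _.
  apply: ler_sum => x /eqP hx; by rewrite -hnear hx.
apply: le_trans (_ : _ <= 5 * \sum_i OPT1 pos a i) _; last by rewrite ler_wpM2l.
apply: le_trans (Htilde_total a posI t).
apply: ler_sum => h _; apply: ler_wpM2l; first exact: hprob_aux_ge0.
exact: cov_le.
Qed.
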